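(* Let $G$ be a finite undirected graph, $\tau\ge1$ an integer, and $e=(u,v)\in E(G)$. Then for every $w\in\Delta_{\lfloor\tau/2\rfloor}(e,G)$ we have $\phi_\tau(e,G)\ge|V(\Omega(w))|$; i.e. $\phi_\tau(e,G)\ge\max\{|V(\Omega(w))| : w\in\Delta_{\lfloor\tau/2\rfloor}(e,G)\}$.
   Context: Graphs are finite, simple, undirected and unweighted; paths may repeat vertices and their length is the number of edges. For vertices $v,u$ of a graph $H$, $u$ is $t$-hop reachable from $v$ in $H$ (written $u\rightarrow_t v$) if there is a path between them in $H$ of length at most $t$. $N_t(v,H)$ is the set of vertices $u\ne v$ that are $t$-hop reachable from $v$ in $H$. For an edge $e=(u,v)$ of $H$, $\Delta_t(e,H)=N_t(u,H)\cap N_t(v,H)$ and $\mathrm{sup}_t(e,H)=|\Delta_t(e,H)|$. The $(k,\tau)$-truss of $G$ is the maximal subgraph $G'$ of $G$ such that $\mathrm{sup}_\tau(e,G')\ge k-2$ for every $e\in E(G')$ (supports computed inside $G'$) and no more edges of $G$ can be added while keeping this property. The higher-order truss number $\phi_\tau(e,G)$ is the maximum $k$ such that $e$ belongs to the $(k,\tau)$-truss of $G$. For a vertex $w$, $\Omega(w)$ is the subgraph of $G$ induced by $\{w\}\cup\{x : x\rightarrow_{\lfloor\tau/2\rfloor} w \text{ in } G\}$. *)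

(* Defs.v *)
From mathcomp Require Import all_boot.
Set Implicit Arguments. Unset Strict Implicit. Unset Printing Implicit Defensive.

(* A finite simple undirected graph G is given by a vertex type T : finType
   and an adjacency relation g : rel T (assumed symmetric and irreflexive).
   A subgraph H of G is represented by its (ordered, symmetric) edge set
   F : {set T * T}; paths only use edges of F. *)

Section HOT.
Variable T : finType.

Definition Eg (g : rel T) : {set T * T} := [set p | g p.1 p.2].

Fixpoint reach (F : {set T * T}) (t : nat) (x y : T) : bool :=
  match t with
  | 0 => x == y
  | t'.+1 => reach F t' x y || [exists z, reach F t' x z && ((z, y) \in F)]
  end.

Definition Nt (F : {set T * T}) (t : nat) (v : T) : {set T} :=
  [set x | (x != v) && reach F t v x].

Definition Delta (F : {set T * T}) (t : nat) (e : T * T) : {set T} :=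
  Nt F t e.1 :&: Nt F t e.2.

Definition sup (F : {set T * T}) (t : nat) (e : T * T) : nat := #|Delta F t e|.

Definition truss_valid (g : rel T) (k tau : nat) (F : {set T * T}) : bool :=
  [&& F \subset Eg g,
      [forall p in F, (p.2, p.1) \in F] &
      [forall p in F, k - 2 <= sup F tau p]].

(* the (k,tau)-truss: the maximal such subgraph, i.e. the union of all of them *)
Definition truss (g : rel T) (k tau : nat) : {set T * T} :=
  \bigcup_(F : {set T * T} | truss_valid g k tau F) F.

(* Supports are at most #|T| - 2, so k never exceeds #|T|
   (for a genuine edge); the range bound #|T|.+3 is therefore harmless. *)
Definition phi (g : rel T) (tau : nat) (e : T * T) : nat :=
  \max_(k < #|T|.+3 | e \in truss g k tau) k.

Definition OmegaV (g : rel T) (tau : nat) (w : T) : {set T} :=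
  [set x | reach (Eg g) tau./2 w x].

End HOT.

(* Main.v *)
Require Import Defs.
From mathcomp Require Import all_boot.
From mathcomp Require Import zify.
Set Implicit Arguments. Unset Strict Implicit.

Section Aux.
Variable T : finType.
Implicit Types F : {set T * T}.

Lemma reach_mono F s t x y : reach F s x y -> s <= t -> reach F t x y.
Proof.
move=> H; elim: t => [|t IH]; first by rewrite leqn0 => /eqP <-.
rewrite leq_eqVlt => /orP [/eqP <- //|Hs] /=.
by rewrite IH.
Qed.

Lemma reach_cat F s t x y z : reach F s x y -> reach F t y z -> reach F (s + t) x z.
Proof.
move=> Hxy; elim: t z => [|t IH] z /=.
  by move=> /eqP <-; rewrite addn0.
rewrite addnS /=.
case/orP => [H|/existsP [z' /andP [H1 H2]]].
  by rewrite IH.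
apply/orP; right; apply/existsP; exists z'; by rewrite IH.
Qed.

Lemma reach_sym F t x y : (forall a b, (a, b) \in F -> (b, a) \in F) ->
  reach F t x y -> reach F t y x.
Proof.
move=> Fs; elim: t x y => [|t IH] x y /=; first by rewrite eq_sym.
case/orP => [H|/existsP [z' /andP [H1 H2]]].
  by rewrite IH.
have H3 : reach F 1 y z'.
  by rewrite /= orbC; apply/orP; left; apply/existsP; exists y; rewrite eqxx Fs.
have := reach_cat H3 (IH _ _ H1); by rewrite add1n.
Qed.

End Aux.

Theorem lemma5 (T : finType) (g : rel T) (gsym : symmetric g)
  (girr : irreflexive g) (tau : nat) (htau : 1 <= tau) (u v : T)
  (huv : g u v) (w : T) (hw : w \in Delta (Eg g) tau./2 (u, v)) :
  #|OmegaV g tau w| <= phi g tau (u, v).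
Proof.
set h := tau./2.
set S := OmegaV g tau w.
set F : {set T * T} := [set p | [&& g p.1 p.2, p.1 \in S & p.2 \in S]].
have EgS : forall a b, (a, b) \in Eg g -> (b, a) \in Eg g.
  by move=> a b; rewrite !inE /= gsym.
have FS : forall a b, (a, b) \in F -> (b, a) \in F.
  by move=> a b; rewrite !inE /= gsym => /and3P [-> -> ->].
have inS : forall x, (x \in S) = reach (Eg g) h w x.
  by move=> x; rewrite inE.
have liftF : forall t x, reach (Eg g) t w x -> t <= h -> reach F t w x.
  elim=> [|t IH] x //= /orP [H|/existsP [z /andP [H1 H2]]] Ht.
    by rewrite IH // ltnW.
  apply/orP; right; apply/existsP; exists z; rewrite IH ?(ltnW Ht) //=.
  have zS : z \in S by rewrite inS; apply: reach_mono H1 _; lia.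
  have xS : x \in S.
    rewrite inS; apply: (@reach_mono _ _ t.+1) => //=.
    by apply/orP; right; apply/existsP; exists z; rewrite H1 H2.
  by move: H2 zS xS; rewrite /F !inE /= => -> -> ->.
have toW : forall a, a \in S -> reach F h a w.
  move=> a; rewrite inS => Ha; apply: (reach_sym FS); exact: (liftF h a Ha (leqnn h)).
have fromW : forall x, x \in S -> reach F h w x.
  by move=> x; rewrite inS => Hx; exact: (liftF h x Hx (leqnn h)).
have h2 : h + h <= tau.
  rewrite addnn /h; have := odd_double_half tau; lia.
have all_reach : forall a x, a \in S -> x \in S -> reach F tau a x.
  move=> a x Ha Hx; apply: reach_mono h2; exact: reach_cat (toW _ Ha) (fromW _ Hx).
move: hw; rewrite !inE /= => /andP [/andP [wu Hu] /andP [wv Hv]].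
have uS : u \in S by rewrite inS; apply: reach_sym Hu.
have vS : v \in S by rewrite inS; apply: reach_sym Hv.
have valid : truss_valid g #|S| tau F.
  apply/and3P; split.
  - by apply/subsetP => p; rewrite !inE => /and3P [].
  - by apply/forall_inP => [[a b]] /FS.
  apply/forall_inP => [[a b]]; rewrite inE /= => /and3P [gab aS bS].
  have sub : S :\ a :\ b \subset Delta F tau (a, b).
    apply/subsetP => x; rewrite /Delta /Nt !inE => /andP [xb /andP [xa xS]] /=.
    have xS2 : x \in S by rewrite inS.
    by rewrite xa xb !all_reach.
  apply: leq_trans (subset_leq_card sub).
  have ab : a != b by apply/eqP => E; move: gab; rewrite E girr.
  rewrite (cardsD1 a S) (cardsD1 b (S :\ a)).
  case: (a \in S); case: (b \in S :\ a); rewrite ?add0n ?add1n ?subSS ?subn1 //=.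
  all: rewrite ?subn0. all: try exact: leqnn. all: try exact: leq_pred. all: try exact: leq_subr.
have uvF : (u, v) \in F by rewrite inE /= huv uS vS.
have intr : (u, v) \in truss g #|S| tau.
  by apply/bigcupP; exists F.
have Hk : #|S| < #|T|.+3 by have := max_card S; lia.
rewrite /phi.
exact: (@leq_bigmax_cond _ (fun k : 'I_#|T|.+3 => (u, v) \in truss g k tau)
          (fun k => nat_of_ord k) (Ordinal Hk) intr).
Qed.
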